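(* Let $a\ge1$ be an integer with $a^dq>1$. For $l=1,2,\dots$ let $L_l=\{x\in\mathbb{R}^d: a^{(l-1)^d}<|x|<a^{l^d}\}$. Then $P$-almost surely there exists $l_0(\omega)$ such that for every $l\ge l_0(\omega)$ the layer $L_l$ contains a cube $Q(l,n)$ (entirely inside $L_l$) on which $V(x,\omega)=0$.
   Context: For $k\in\mathbb{Z}^d$ let $Q_k=\{x\in\mathbb{R}^d:\|x-k\|_\infty\le1/2\}$, let $(\varepsilon_k)$ be i.i.d. with $P\{\varepsilon_k=1\}=p>0$, $P\{\varepsilon_k=0\}=q=1-p>0$, and $V(x,\omega)=\sum_k\varepsilon_kI_{Q_k}(x)$. For an integer $l\ge1$, $Q(l,n)$, $n\in\mathbb{Z}^d$, are cubes of edge length $l$ partitioning $\mathbb{R}^d$, each a union of $l^d$ unit cubes $Q_k$ (so that $V=0$ on $Q(l,n)$ iff all its $l^d$ unit cubes have $\varepsilon_k=0$). *)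

(* Defs.v *)
From Stdlib Require Import Reals ZArith List.
Open Scope R_scope.

(* Sites of Z^d are lists of integers of length d; a configuration
   (sample point omega) is a map site -> bool, with omega k = true
   meaning eps_k = 1 and omega k = false meaning eps_k = 0. *)
Definition site (d : nat) (k : list Z) : Prop := length k = d.

Fixpoint sumR (d : nat) (f : nat -> R) : R :=
  match d with O => 0 | S d' => sumR d' f + f d' end.

Definition enorm (d : nat) (x : nat -> R) : R := sqrt (sumR d (fun i => x i ^ 2)).

(* Cylinder sets of the Bernoulli product measure: a finite list of
   constraints (site, value) at distinct sites. *)
Definition cylinder := list (list Z * bool).

Definition valid_cyl (d : nat) (c : cylinder) : Prop :=
  Forall (fun s : list Z * bool => site d (fst s)) c /\ NoDup (map (fun s : list Z * bool => fst s) c).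

Definition in_cyl (c : cylinder) (omega : list Z -> bool) : Prop :=
  Forall (fun s : list Z * bool => omega (fst s) = snd s) c.

(* P{eps_k = 1} = p, P{eps_k = 0} = q = 1 - p *)
Definition cyl_prob (p : R) (c : cylinder) : R :=
  fold_right (fun (s : list Z * bool) (acc : R) => (if snd s then p else 1 - p) * acc) 1 c.

(* N is a P-null set: for every eps > 0 it is covered by countably many
   cylinders of total probability <= eps (null sets of the product measure). *)
Definition null_set (d : nat) (p : R) (N : (list Z -> bool) -> Prop) : Prop :=
  forall eps : R, eps > 0 ->
    exists C : nat -> cylinder,
      (forall j, valid_cyl d (C j)) /\
      (forall omega, N omega -> exists j, in_cyl (C j) omega) /\
      (forall m, sum_f_R0 (fun j => cyl_prob p (C j)) m <= eps).

Definition almost_surely (d : nat) (p : R) (E : (list Z -> bool) -> Prop) : Prop :=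
  null_set d p (fun omega => ~ E omega).

(* The cube Q(l,n), n in Z^d (only coordinates 0..d-1 of n matter):
   union of the unit cubes Q_k with l*n_i <= k_i <= l*n_i + l - 1,
   i.e. the closed cube prod_i [l n_i - 1/2, l n_i + l - 1/2]. *)
Definition in_Qln (d l : nat) (n : nat -> Z) (x : nat -> R) : Prop :=
  forall i, (i < d)%nat ->
    IZR (Z.of_nat l * n i) - /2 <= x i <= IZR (Z.of_nat l * n i) + INR l - /2.

Definition site_in_Qln (d l : nat) (n : nat -> Z) (k : list Z) : Prop :=
  site d k /\
  forall i, (i < d)%nat ->
    (Z.of_nat l * n i <= nth i k 0%Z <= Z.of_nat l * n i + Z.of_nat l - 1)%Z.

Definition in_layer (d a l : nat) (x : nat -> R) : Prop :=
  INR a ^ ((l - 1) ^ d) < enorm d x < INR a ^ (l ^ d).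

(* V(.,omega) = 0 on Q(l,n) iff eps_k = 0 for all unit cubes Q_k in Q(l,n) *)
Definition V_zero_on_Qln (d l : nat) (n : nat -> Z) (omega : list Z -> bool) : Prop :=
  forall k, site_in_Qln d l n k -> omega k = false.

(* Main.v *)
Require Import Defs.
From Stdlib Require Import Reals ZArith List Lia Lra Psatz Classical.
Open Scope R_scope.

Lemma NoDup_concat_map {A B : Type} (f : A -> list B) (L : list A) :
  NoDup L -> (forall x, In x L -> NoDup (f x)) ->
  (forall x y z, In x L -> In y L -> In z (f x) -> In z (f y) -> x = y) ->
  NoDup (concat (map f L)).
Proof.
  induction L as [|x L IH]; intros HN Hf Hd; simpl; [constructor|].
  inversion HN; subst.
  apply NoDup_app.
  - apply Hf; simpl; auto.
  - apply IH; auto.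
    + intros; apply Hf; simpl; auto.
    + intros; eapply Hd; simpl; eauto.
  - intros z Hz Hz'. apply in_concat in Hz'. destruct Hz' as [l [Hl Hzl]].
    apply in_map_iff in Hl. destruct Hl as [y [<- Hy]].
    assert (x = y) by (eapply Hd; simpl; eauto). subst. contradiction.
Qed.

Fixpoint prod_lists (rs : list (list Z)) : list (list Z) :=
  match rs with
  | nil => nil :: nil
  | r :: rs' => concat (map (fun z => map (cons z) (prod_lists rs')) r)
  end.

Lemma in_prod_lists rs k : In k (prod_lists rs) <-> Forall2 (fun z r => In z r) k rs.
Proof.
  revert k; induction rs as [|r rs IH]; intros k; simpl; split.
  - intros [<-|[]]; constructor.
  - intros H; inversion H; auto.
  - intros H. apply in_concat in H. destruct H as [l [Hl Hk]].
    apply in_map_iff in Hl. destruct Hl as [z [<- Hz]].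
    apply in_map_iff in Hk. destruct Hk as [k' [<- Hk']].
    constructor; auto. apply IH; auto.
  - intros H. inversion H; subst. apply in_concat. eexists. split.
    + apply in_map_iff. eexists; split; [reflexivity|eauto].
    + apply in_map. apply IH; auto.
Qed.

Lemma NoDup_prod_lists rs : Forall (@NoDup Z) rs -> NoDup (prod_lists rs).
Proof.
  induction rs as [|r rs IH]; intros H; simpl.
  - constructor; [simpl; tauto|constructor].
  - inversion H; subst. apply NoDup_concat_map; auto.
    + intros z _. apply NoDup_map_NoDup_ForallPairs; auto.
      intros a b _ _ E. injection E; auto.
    + intros x y z _ _ G1 G2. apply in_map_iff in G1. apply in_map_iff in G2.
      destruct G1 as [u [<- _]]; destruct G2 as [v [E _]]. injection E; auto.
Qed.

Lemma length_concat_const {A B} (f : A -> list B) (L : list A) m :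
  (forall x, In x L -> length (f x) = m) -> length (concat (map f L)) = (length L * m)%nat.
Proof.
  induction L; intros H; simpl; auto. rewrite length_app, H, IHL; simpl; auto.
  intros; apply H; simpl; auto.
Qed.

Lemma length_prod_lists rs :
  length (prod_lists rs) = fold_right (fun r acc => (length r * acc)%nat) 1%nat rs.
Proof.
  induction rs; simpl; auto. rewrite (length_concat_const _ _ (length (prod_lists rs))).
  - rewrite IHrs; auto.
  - intros; rewrite length_map; auto.
Qed.

Definition zrange (lo : Z) (n : nat) : list Z := map (fun i => (lo + Z.of_nat i)%Z) (seq 0 n).

Lemma in_zrange lo n z : In z (zrange lo n) <-> (lo <= z < lo + Z.of_nat n)%Z.
Proof.
  unfold zrange; rewrite in_map_iff; split.
  - intros [i [<- Hi]]. apply in_seq in Hi. lia.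
  - intros H. exists (Z.to_nat (z - lo)). split; [lia|]. apply in_seq. lia.
Qed.

Lemma NoDup_zrange lo n : NoDup (zrange lo n).
Proof.
  unfold zrange. apply NoDup_map_NoDup_ForallPairs; [|apply seq_NoDup].
  intros a b _ _ E. lia.
Qed.

Lemma length_zrange lo n : length (zrange lo n) = n.
Proof. unfold zrange; rewrite length_map, length_seq; auto. Qed.

Lemma Forall2_nth_iff {A B} (P : A -> B -> Prop) (xs : list A) (ys : list B) dx dy :
  Forall2 P xs ys <-> (length xs = length ys /\ forall i, (i < length xs)%nat -> P (nth i xs dx) (nth i ys dy)).
Proof.
  revert ys; induction xs as [|x xs IH]; intros [|y ys]; split; intros H; simpl in *.
  - split; auto; intros; lia.
  - constructor.
  - inversion H.
  - destruct H; discriminate.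
  - inversion H.
  - destruct H; discriminate.
  - inversion H; subst. apply IH in H5. destruct H5 as [H1 H2]. split; [lia|].
    intros [|i] Hi; auto. apply H2; lia.
  - destruct H as [H1 H2]. constructor.
    + apply (H2 0%nat); lia.
    + apply IH. split; [lia|]. intros i Hi. apply (H2 (S i)); lia.
Qed.

Definition sumcyl (p : R) (cs : list cylinder) : R :=
  fold_right (fun c acc => cyl_prob p c + acc) 0 cs.

Fixpoint cyl_some (B : list (list Z)) : list cylinder :=
  match B with
  | nil => nil
  | s :: B' => ((s, true) :: nil) :: map (cons (s, false)) (cyl_some B')
  end.

Fixpoint cyl_all (Bs : list (list (list Z))) : list cylinder :=
  match Bs with
  | nil => nil :: nil
  | B :: Bs' => concat (map (fun c => map (app c) (cyl_all Bs')) (cyl_some B))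
  end.

Lemma sumcyl_app p a b : sumcyl p (a ++ b) = sumcyl p a + sumcyl p b.
Proof. induction a; simpl; [lra|]. rewrite IHa; lra. Qed.

Lemma sumcyl_cons_map p x cs :
  sumcyl p (map (cons x) cs) = (if snd x then p else 1 - p) * sumcyl p cs.
Proof. induction cs; simpl; [lra|]. rewrite IHcs. unfold cyl_prob at 1. simpl. fold (cyl_prob p a). lra. Qed.

Lemma cyl_prob_app p c c' : cyl_prob p (c ++ c') = cyl_prob p c * cyl_prob p c'.
Proof. induction c; unfold cyl_prob in *; simpl; [lra|]. rewrite IHc; lra. Qed.

Lemma sumcyl_app_map p c cs : sumcyl p (map (app c) cs) = cyl_prob p c * sumcyl p cs.
Proof. induction cs; simpl; [lra|]. rewrite IHcs, cyl_prob_app; lra. Qed.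

Lemma sumcyl_some p B : sumcyl p (cyl_some B) = 1 - (1 - p) ^ length B.
Proof.
  induction B; simpl; [lra|]. rewrite sumcyl_cons_map, IHB. simpl. unfold cyl_prob; simpl. lra.
Qed.

Lemma sumcyl_all p Bs :
  sumcyl p (cyl_all Bs) = fold_right (fun B acc => (1 - (1 - p) ^ length B) * acc) 1 Bs.
Proof.
  induction Bs as [|B Bs IH]; simpl.
  - unfold cyl_prob; simpl; lra.
  - rewrite <- sumcyl_some, <- IH. induction (cyl_some B); simpl; [lra|].
    rewrite sumcyl_app, sumcyl_app_map, IHl. lra.
Qed.

Lemma cover_some (omega : list Z -> bool) B :
  (exists s, In s B /\ omega s = true) -> exists c, In c (cyl_some B) /\ in_cyl c omega.
Proof.
  induction B as [|s B IH]; intros [s0 [Hs Ho]]; simpl in *; [contradiction|].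
  destruct (omega s) eqn:E.
  - exists ((s,true)::nil). split; auto. repeat constructor; auto.
  - destruct Hs as [->|Hs]; [congruence|].
    destruct IH as [c [Hc Hin]]; eauto.
    exists ((s,false)::c). split; [right; apply in_map; auto|]. constructor; auto.
Qed.

Lemma in_cyl_app c c' omega : in_cyl c omega -> in_cyl c' omega -> in_cyl (c ++ c') omega.
Proof. unfold in_cyl; intros; apply Forall_app; auto. Qed.

Lemma cover_all (omega : list Z -> bool) Bs :
  (forall B, In B Bs -> exists s, In s B /\ omega s = true) ->
  exists c, In c (cyl_all Bs) /\ in_cyl c omega.
Proof.
  induction Bs as [|B Bs IH]; intros H; simpl.
  - exists nil; split; auto. constructor.
  - destruct (cover_some omega B) as [c1 [H1 H1']]; [apply H; simpl; auto|].
    destruct IH as [c2 [H2 H2']]; [intros; apply H; simpl; auto|].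
    exists (c1 ++ c2). split; [|apply in_cyl_app; auto].
    apply in_concat. exists (map (app c1) (cyl_all Bs)). split; [apply (in_map (fun c => map (app c) (cyl_all Bs))); auto|].
    apply in_map; auto.
Qed.

Lemma some_prefix B c : In c (cyl_some B) -> exists t, B = map fst c ++ t.
Proof.
  revert c; induction B as [|s B IH]; intros c Hc; simpl in *; [contradiction|].
  destruct Hc as [<-|Hc].
  - exists B; reflexivity.
  - apply in_map_iff in Hc. destruct Hc as [c' [<- Hc']].
    destruct (IH c' Hc') as [t Ht]. exists t. simpl. rewrite Ht; auto.
Qed.

Lemma nodup_app_disj {A} (l m : list A) a : NoDup (l ++ m) -> In a l -> In a m -> False.
Proof.
  induction l; simpl; intros HN Hl Hm; [contradiction|].
  inversion HN; subst. destruct Hl as [->|Hl]; eauto.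
  apply H1. apply in_app_iff; auto.
Qed.

Lemma all_valid Bs c : In c (cyl_all Bs) -> NoDup (concat Bs) ->
  NoDup (map fst c) /\ incl (map fst c) (concat Bs).
Proof.
  revert c; induction Bs as [|B Bs IH]; intros c Hc HN; simpl in *.
  - destruct Hc as [<-|[]]. simpl. split; [constructor|intros x []].
  - apply in_concat in Hc. destruct Hc as [l [Hl Hc]]. apply in_map_iff in Hl.
    destruct Hl as [c1 [<- Hc1]]. apply in_map_iff in Hc. destruct Hc as [c2 [<- Hc2]].
    destruct (some_prefix _ _ Hc1) as [t Ht]. rewrite Ht in HN |- *.
    rewrite <- app_assoc in HN.
    assert (HN2 : NoDup (concat Bs)) by (apply NoDup_app_remove_l in HN; apply NoDup_app_remove_l in HN; auto).
    destruct (IH c2 Hc2 HN2) as [A1 A2].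
    rewrite map_app. split.
    + apply NoDup_app; auto.
      * apply NoDup_app_remove_r in HN; auto.
      * intros a Ha Ha'. apply A2 in Ha'.
        apply (nodup_app_disj _ _ a HN); auto. apply in_app_iff; auto.
    + intros a Ha. apply in_app_iff in Ha. rewrite <- app_assoc. apply in_app_iff.
      destruct Ha; auto. right; apply in_app_iff; auto.
Qed.

Lemma cyl_prob_nonneg p c : 0 <= p <= 1 -> 0 <= cyl_prob p c.
Proof.
  intros Hp; induction c as [|[s b] c IH]; unfold cyl_prob in *; simpl; [lra|].
  apply Rmult_le_pos; auto. destruct b; lra.
Qed.

Lemma sumcyl_nonneg p cs : 0 <= p <= 1 -> 0 <= sumcyl p cs.
Proof. intros; induction cs; simpl; [lra|]. pose proof (cyl_prob_nonneg p a H); lra. Qed.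

Lemma skipn_nth_cons {A} (F : list A) k d : (k < length F)%nat -> skipn k F = nth k F d :: skipn (S k) F.
Proof.
  revert k; induction F; intros k Hk; simpl in *; [lia|]. destruct k; simpl; auto.
  apply IHF; lia.
Qed.

Lemma partial_sum_le p F n : 0 <= p <= 1 -> (S n <= length F)%nat ->
  sum_f_R0 (fun j => cyl_prob p (nth j F nil)) n + sumcyl p (skipn (S n) F) = sumcyl p F.
Proof.
  intros Hp; induction n; intros Hn.
  - simpl. destruct F; simpl in *; [lia|]. lra.
  - simpl. rewrite <- IHn by lia. rewrite (skipn_nth_cons F (S n) nil) by lia. simpl. lra.
Qed.

Section Layers.
Variable d : nat.
Variable p : R.
Variable cyls : nat -> list cylinder.

Definition Fl (L m : nat) := concat (map cyls (seq L m)).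

Lemma Fl_S L m : Fl L (S m) = Fl L m ++ cyls (L + m).
Proof. unfold Fl. rewrite seq_S, map_app, concat_app; simpl. rewrite app_nil_r; auto. Qed.

Lemma Fl_prefix L m k : exists T, Fl L (m + k) = Fl L m ++ T.
Proof.
  induction k. - exists nil; rewrite Nat.add_0_r, app_nil_r; auto.
  - destruct IHk as [T HT]. exists (T ++ cyls (L + (m + k))). rewrite Nat.add_succ_r, Fl_S, HT, app_assoc; auto.
Qed.

Lemma Fl_nth L m1 m2 j : (m1 <= m2)%nat -> (j < length (Fl L m1))%nat -> nth j (Fl L m2) nil = nth j (Fl L m1) nil.
Proof.
  intros Hm Hj. destruct (Fl_prefix L m1 (m2 - m1)) as [T HT].
  replace m2 with (m1 + (m2 - m1))%nat by lia. rewrite HT, app_nth1; auto.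
Qed.

Lemma Fl_length L m : (forall l, (L <= l)%nat -> cyls l <> nil) -> (m <= length (Fl L m))%nat.
Proof.
  intros H; induction m; simpl; [lia|]. rewrite Fl_S, length_app.
  destruct (cyls (L + m)) eqn:E; [exfalso; apply (H (L+m)%nat); auto; lia|]. simpl; lia.
Qed.

Lemma Fl_in L m c : In c (Fl L m) -> exists l, (L <= l)%nat /\ In c (cyls l).
Proof.
  unfold Fl; intros H. apply in_concat in H. destruct H as [x [Hx Hc]].
  apply in_map_iff in Hx. destruct Hx as [l [<- Hl]]. apply in_seq in Hl. exists l; split; auto; lia.
Qed.

Lemma Fl_sum L m : (1 <= L)%nat -> 0 <= p <= 1 ->
  (forall l, (L <= l)%nat -> sumcyl p (cyls l) <= / (INR l * INR (S l))) ->
  sumcyl p (Fl L m) <= / INR L - / INR (L + m).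
Proof.
  intros HL Hp H. induction m.
  - simpl. rewrite Nat.add_0_r. unfold Fl; simpl; lra.
  - rewrite Fl_S, sumcyl_app. specialize (H (L + m)%nat ltac:(lia)).
    assert (E : / INR L - / INR (L + m) + / (INR (L + m) * INR (S (L + m))) = / INR L - / INR (L + S m)).
    { replace (L + S m)%nat with (S (L + m)) by lia. rewrite S_INR.
      assert (0 < INR (L + m)) by (apply lt_0_INR; lia). assert (0 < INR L) by (apply lt_0_INR; lia). field; repeat split; lra. }
    lra.
Qed.

Lemma null_from_layers (N : (list Z -> bool) -> Prop) L0 :
  0 <= p <= 1 -> (1 <= L0)%nat ->
  (forall l c, (L0 <= l)%nat -> In c (cyls l) -> valid_cyl d c) ->
  (forall l, (L0 <= l)%nat -> cyls l <> nil) ->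
  (forall l, (L0 <= l)%nat -> sumcyl p (cyls l) <= / (INR l * INR (S l))) ->
  (forall omega, N omega -> forall L, exists l, (L <= l)%nat /\ exists c, In c (cyls l) /\ in_cyl c omega) ->
  null_set d p N.
Proof.
  intros Hp HL0 Hv Hne Hs Hcov eps Heps.
  destruct (archimed_cor1 eps Heps) as [L1 [HL1 HL1']].
  set (L := Nat.max L0 L1).
  assert (HLe : / INR L <= / INR L1).
  { apply Rinv_le_contravar; [apply lt_0_INR; lia|apply le_INR; lia]. }
  assert (Hne' : forall l, (L <= l)%nat -> cyls l <> nil) by (intros; apply Hne; lia).
  exists (fun j => nth j (Fl L (S j)) nil). split; [|split].
  - intros j. assert (Hj : (j < length (Fl L (S j)))%nat) by (pose proof (Fl_length L (S j) Hne'); lia).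
    pose proof (nth_In _ nil Hj) as Hin. apply Fl_in in Hin. destruct Hin as [l [Hl1 Hl]]. apply (Hv l); auto; lia.
  - intros omega Ho. destruct (Hcov omega Ho L) as [l [Hl [c [Hc Hin]]]].
    assert (HcF : In c (Fl L (S (l - L)))).
    { unfold Fl. apply in_concat. exists (cyls l). split; auto. apply in_map. apply in_seq. lia. }
    destruct (In_nth _ _ nil HcF) as [j [Hj Hjc]]. exists j.
    assert (Hlen : (S j <= length (Fl L (S j)))%nat) by (pose proof (Fl_length L (S j) Hne'); lia).
    destruct (Nat.le_ge_cases (S j) (S (l - L))) as [Hc1|Hc1].
    + assert (E: nth j (Fl L (S (l-L))) nil = nth j (Fl L (S j)) nil) by (apply Fl_nth; lia). rewrite <- E. subst c. exact Hin.
    + rewrite (Fl_nth L (S (l - L)) (S j) j) by (auto; lia). subst c; exact Hin.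
  - intros m.
    assert (Heq : sum_f_R0 (fun j => cyl_prob p (nth j (Fl L (S j)) nil)) m =
                  sum_f_R0 (fun j => cyl_prob p (nth j (Fl L (S m)) nil)) m).
    { apply sum_eq. intros j Hj. rewrite (Fl_nth L (S j) (S m) j); auto; try lia.
      pose proof (Fl_length L (S j) Hne'); lia. }
    rewrite Heq.
    pose proof (partial_sum_le p (Fl L (S m)) m Hp (Fl_length L (S m) Hne')).
    pose proof (sumcyl_nonneg p (skipn (S m) (Fl L (S m))) Hp).
    pose proof (Fl_sum L (S m) ltac:(lia) Hp (fun l Hl => Hs l ltac:(lia))).
    assert (0 < / INR (L + S m)) by (apply Rinv_0_lt_compat, lt_0_INR; lia).
    unfold cylinder in *. lra.
Qed.
End Layers.

Lemma bern x n : 0 <= x -> 1 + INR n * x <= (1 + x) ^ n.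
Proof.
  intros Hx; induction n; [simpl; lra|]. rewrite S_INR. simpl.
  assert (0 <= INR n) by apply pos_INR. nra.
Qed.

Lemma pow_le_1' x n : 0 <= x <= 1 -> x ^ n <= 1.
Proof. intros H; induction n; simpl; [lra|]. assert (0 <= x ^ n) by (apply pow_le; lra). nra. Qed.

Lemma bern_neg x N : 0 <= x <= 1 -> (1 - x) ^ N * (1 + INR N * x) <= 1.
Proof.
  intros Hx. pose proof (bern x N ltac:(lra)).
  assert (0 <= (1 - x) ^ N) by (apply pow_le; lra).
  apply Rle_trans with ((1 - x) ^ N * (1 + x) ^ N); [apply Rmult_le_compat_l; auto|].
  rewrite <- Rpow_mult_distr. apply pow_le_1'. nra.
Qed.

Lemma lin_exp b : 1 < b -> exists N, forall n, (N <= n)%nat -> INR n <= b ^ n.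
Proof.
  intros Hb. set (s := sqrt b).
  assert (Hs : 1 < s) by (unfold s; rewrite <- sqrt_1; apply sqrt_lt_1_alt; lra).
  assert (Hss : s * s = b) by (unfold s; apply sqrt_sqrt; lra).
  destruct (archimed_cor1 ((s - 1) ^ 2) ltac:(nra)) as [N [HN HN']].
  exists N. intros n Hn.
  assert (HnN : INR N <= INR n) by (apply le_INR; auto).
  assert (HN0 : 0 < INR N) by (apply lt_0_INR; auto).
  assert (Hk : 1 <= INR n * (s - 1) ^ 2).
  { assert (1 <= INR N * (s-1)^2).
    { apply Rmult_lt_compat_l with (r := INR N) in HN; auto. rewrite Rinv_r in HN; lra. }
    assert (0 <= (s-1)^2) by nra. nra. }
  pose proof (bern (s - 1) n ltac:(lra)). replace (1 + (s - 1)) with s in H by ring.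
  replace (b ^ n) with (s ^ n * s ^ n) by (rewrite <- Rpow_mult_distr, Hss; auto).
  assert (0 <= INR n) by apply pos_INR.
  assert (INR n * (s - 1) <= s ^ n) by lra.
  assert (0 <= INR n * (s - 1)) by nra.
  assert (INR n * (s - 1) * (INR n * (s - 1)) <= s ^ n * s ^ n) by (apply Rmult_le_compat; auto).
  nra.
Qed.

Lemma poly_exp P : forall b K, 1 < b -> exists N, forall n, (N <= n)%nat -> K * INR n ^ P <= b ^ n.
Proof.
  induction P; intros b K Hb.
  - destruct (lin_exp b Hb) as [N1 HN1].
    destruct (archimed_cor1 1 ltac:(lra)) as [_ _].
    destruct (Rle_or_lt K 0) as [HK|HK].
    + exists 0%nat. intros n _. simpl. assert (0 < b ^ n) by (apply pow_lt; lra). lra.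
    + destruct (archimed_cor1 (/ K) ltac:(apply Rinv_0_lt_compat; lra)) as [N2 [HN2 HN2']].
      exists (Nat.max N1 N2). intros n Hn. simpl. rewrite Rmult_1_r.
      specialize (HN1 n ltac:(lia)).
      assert (INR N2 <= INR n) by (apply le_INR; lia).
      assert (0 < INR N2) by (apply lt_0_INR; lia).
      assert (K <= INR N2).
      { assert (/ INR N2 * (K * INR N2) < / K * (K * INR N2)) by (apply Rmult_lt_compat_r; nra).
        replace (/ INR N2 * (K * INR N2)) with K in H1 by (field; lra).
        replace (/ K * (K * INR N2)) with (INR N2) in H1 by (field; lra). lra. }
      lra.
  - set (c := sqrt b).
    assert (Hc : 1 < c) by (unfold c; rewrite <- sqrt_1; apply sqrt_lt_1_alt; lra).
    assert (Hcc : c * c = b) by (unfold c; apply sqrt_sqrt; lra).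
    destruct (IHP c K Hc) as [N1 HN1]. destruct (lin_exp c Hc) as [N2 HN2].
    exists (Nat.max N1 N2). intros n Hn.
    specialize (HN1 n ltac:(lia)). specialize (HN2 n ltac:(lia)).
    replace (b ^ n) with (c ^ n * c ^ n) by (rewrite <- Rpow_mult_distr, Hcc; auto).
    assert (0 <= INR n) by apply pos_INR.
    assert (0 < c ^ n) by (apply pow_lt; lra).
    replace (K * INR n ^ S P) with ((K * INR n ^ P) * INR n) by (simpl; ring).
    apply Rle_trans with (c ^ n * INR n); [apply Rmult_le_compat_r; auto|].
    apply Rmult_le_compat_l; lra.
Qed.

Definition cube_sites (l : nat) (nl : list Z) : list (list Z) :=
  prod_lists (map (fun ni => zrange (Z.of_nat l * ni) l) nl).

Definition nfun (nl : list Z) : nat -> Z := fun i => nth i nl 0%Z.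

Lemma in_cube_sites l nl k : In k (cube_sites l nl) <->
  Forall2 (fun z ni => (Z.of_nat l * ni <= z < Z.of_nat l * ni + Z.of_nat l)%Z) k nl.
Proof.
  unfold cube_sites. rewrite in_prod_lists. revert k; induction nl; intros k; simpl; split; intros H.
  - inversion H; constructor.
  - inversion H; constructor.
  - inversion H; subst. constructor; [apply in_zrange; auto|]. apply IHnl; auto.
  - inversion H; subst. constructor; [apply in_zrange; auto|]. apply IHnl; auto.
Qed.

Lemma cube_sites_length l nl k : In k (cube_sites l nl) -> length k = length nl.
Proof. intros H. apply in_cube_sites in H. apply Forall2_length in H; auto. Qed.

Lemma cube_sites_len l nl : length (cube_sites l nl) = (l ^ length nl)%nat.
Proof.
  unfold cube_sites. rewrite length_prod_lists. induction nl; simpl; auto.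
  rewrite IHnl, length_zrange; auto.
Qed.

Lemma site_in_cube d l nl k : length nl = d -> site_in_Qln d l (nfun nl) k -> In k (cube_sites l nl).
Proof.
  intros Hl [Hs Hk]. apply in_cube_sites. apply (Forall2_nth_iff _ _ _ 0%Z 0%Z).
  unfold site in Hs. split; [lia|]. intros i Hi. specialize (Hk i ltac:(lia)). unfold nfun in Hk. lia.
Qed.

Lemma NoDup_cube_sites l nl : NoDup (cube_sites l nl).
Proof.
  apply NoDup_prod_lists. induction nl; simpl; constructor; auto. apply NoDup_zrange.
Qed.

Lemma cube_disjoint l x y z : (1 <= l)%nat -> In z (cube_sites l x) -> In z (cube_sites l y) -> x = y.
Proof.
  intros Hl Hx Hy. apply in_cube_sites in Hx, Hy. revert y Hy. induction Hx as [|z0 n0 zs ns Hzn Hx IHHx]; intros y Hy.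
  - inversion Hy; auto.
  - inversion Hy; subst. f_equal; [|apply IHHx; auto]. nia.
Qed.

Section Main.
Variables (d a : nat) (p : R).

Definition RR (l : nat) : nat := (a ^ (l ^ d))%nat.
Definition AA (l : nat) : nat := (RR l / (2 * l) + 2)%nat.
Definition K0 (l : nat) : nat := (3 * RR l / (4 * l))%nat.
Definition M0 (l : nat) : nat := (K0 l - AA l)%nat.
Definition K1 (l : nat) : nat := (RR l / (2 * d * l))%nat.
Definition idx (l : nat) : list (list Z) :=
  prod_lists (zrange (Z.of_nat (AA l)) (M0 l) :: repeat (zrange 0 (K1 l)) (d - 1)).
Definition blocks (l : nat) := map (cube_sites l) (idx l).
Definition cyls (l : nat) := cyl_all (blocks l).

Lemma idx_mem l nl : (1 <= d)%nat -> In nl (idx l) ->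
  length nl = d /\ (Z.of_nat (AA l) <= nth 0 nl 0 < Z.of_nat (AA l) + Z.of_nat (M0 l))%Z /\
  forall i, (1 <= i < d)%nat -> (0 <= nth i nl 0 < Z.of_nat (K1 l))%Z.
Proof.
  intros Hd H. unfold idx in H. apply in_prod_lists in H.
  apply (Forall2_nth_iff _ _ _ 0%Z nil) in H. destruct H as [Hlen H].
  simpl in Hlen. rewrite repeat_length in Hlen. split; [lia|]. split.
  - specialize (H 0%nat ltac:(lia)). simpl in H. apply in_zrange in H; lia.
  - intros i Hi. specialize (H i ltac:(lia)). destruct i; [lia|]. simpl in H.
    rewrite nth_repeat_lt in H by lia. apply in_zrange in H; lia.
Qed.

Lemma idx_len l : length (idx l) = (M0 l * K1 l ^ (d - 1))%nat.
Proof.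
  unfold idx. rewrite length_prod_lists. simpl. rewrite length_zrange. f_equal.
  induction (d - 1)%nat; simpl; auto. rewrite IHn, length_zrange; auto.
Qed.

Lemma NoDup_idx l : NoDup (idx l).
Proof.
  apply NoDup_prod_lists. constructor; [apply NoDup_zrange|].
  induction (d - 1)%nat; simpl; constructor; auto. apply NoDup_zrange.
Qed.

Lemma NoDup_blocks l : (1 <= l)%nat -> NoDup (concat (blocks l)).
Proof.
  intros Hl. apply NoDup_concat_map; [apply NoDup_idx| |].
  - intros; apply NoDup_cube_sites.
  - intros x y z _ _ Hx Hy. eapply cube_disjoint; eauto.
Qed.

Lemma cyls_valid l c : (1 <= d)%nat -> (1 <= l)%nat -> In c (cyls l) -> valid_cyl d c.
Proof.
  intros Hd Hl Hc. destruct (all_valid _ _ Hc (NoDup_blocks l Hl)) as [H1 H2].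
  split; auto. apply Forall_forall. intros [s b] Hs.
  assert (In s (concat (blocks l))) by (apply H2; apply in_map_iff; exists (s, b); auto).
  apply in_concat in H. destruct H as [B [HB Hs']]. unfold blocks in HB.
  apply in_map_iff in HB. destruct HB as [nl [<- Hnl]].
  apply cube_sites_length in Hs'. destruct (idx_mem l nl Hd Hnl) as [Hn _].
  unfold site; simpl; lia.
Qed.

Lemma fold_const_len m (Bs : list (list (list Z))) :
  (forall B, In B Bs -> length B = m) ->
  fold_right (fun B acc => (1 - (1 - p) ^ length B) * acc) 1 Bs = (1 - (1 - p) ^ m) ^ length Bs.
Proof.
  induction Bs; intros H; simpl; auto. rewrite H, IHBs; auto; simpl; auto.
  intros; apply H; simpl; auto.
Qed.

Lemma cyls_sum l : (1 <= d)%nat ->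
  sumcyl p (cyls l) = (1 - (1 - p) ^ (l ^ d)) ^ (M0 l * K1 l ^ (d - 1)).
Proof.
  intros Hd. unfold cyls. rewrite sumcyl_all, (fold_const_len (l ^ d)).
  - unfold blocks. rewrite length_map, idx_len; auto.
  - intros B HB. unfold blocks in HB. apply in_map_iff in HB. destruct HB as [nl [<- Hnl]].
    rewrite cube_sites_len. destruct (idx_mem l nl Hd Hnl) as [-> _]; auto.
Qed.

Lemma cyls_nonempty l : (1 <= d)%nat -> (1 <= l)%nat -> cyls l <> nil.
Proof.
  intros Hd Hl E. destruct (cover_all (fun _ => true) (blocks l)) as [c [Hc _]].
  - intros B HB. unfold blocks in HB. apply in_map_iff in HB. destruct HB as [nl [<- Hnl]].
    destruct (cube_sites l nl) as [|s S] eqn:Es.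
    + assert (Hlen := cube_sites_len l nl). rewrite Es in Hlen. simpl in Hlen.
      assert (0 < l ^ length nl)%nat by (apply Nat.neq_0_lt_0, Nat.pow_nonzero; lia). lia.
    + exists s; simpl; auto.
  - fold (cyls l) in Hc. rewrite E in Hc. contradiction.
Qed.
End Main.

Lemma div_bounds x y : (0 < y)%nat -> INR y * INR (x / y) <= INR x < INR y * (INR (x / y) + 1).
Proof.
  intros Hy. pose proof (Nat.div_mod_eq x y). pose proof (Nat.mod_upper_bound x y ltac:(lia)).
  assert (E : INR x = INR y * INR (x / y) + INR (x mod y)).
  { rewrite <- mult_INR, <- plus_INR. f_equal. auto. }
  apply lt_INR in H0. pose proof (pos_INR (x mod y)). split; nra.
Qed.

Lemma sumR_ge0 d f : (1 <= d)%nat -> (forall i, 0 <= f i) -> f 0%nat <= sumR d f.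
Proof.
  intros Hd Hf. induction d; [lia|]. simpl. destruct d; simpl.
  - lra.
  - assert (f 0%nat <= sumR (S d) f) by (apply IHd; lia). specialize (Hf (S d)). simpl in H. lra.
Qed.

Lemma sumR_le d f c : (1 <= d)%nat -> (forall i, (1 <= i < d)%nat -> f i <= c) ->
  sumR d f <= f 0%nat + INR (d - 1) * c.
Proof.
  intros Hd Hf. induction d; [lia|]. destruct d.
  - simpl. lra.
  - assert (sumR (S d) f <= f 0%nat + INR (S d - 1) * c) by (apply IHd; [lia|intros; apply Hf; lia]).
    specialize (Hf (S d) ltac:(lia)).
    change (sumR (S (S d)) f) with (sumR (S d) f + f (S d)).
    replace (INR (S (S d) - 1)) with (INR (S d - 1) + 1) by (rewrite <- S_INR; f_equal; lia).
    lra.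
Qed.

Lemma IZR_mul_nat l n : IZR (Z.of_nat l * n) = INR l * IZR n.
Proof. rewrite mult_IZR, <- INR_IZR_INZ; auto. Qed.

Lemma geo (d a l : nat) : (1 <= d)%nat -> (2 <= a)%nat -> (1 <= l)%nat ->
  16 * INR d * INR l <= INR (RR d a l) ->
  forall nl, In nl (idx d a l) -> forall x, in_Qln d l (nfun nl) x -> in_layer d a l x.
Proof.
  intros Hd Ha Hl Hbig nl Hnl x Hx.
  destruct (idx_mem d a l nl Hd Hnl) as [Hlen [Hn0 Hni]].
  set (Rl := INR l) in *. set (D := INR d) in *. set (Rr := INR (RR d a l)) in *.
  assert (HRl : 1 <= Rl) by (unfold Rl; apply (le_INR 1); auto).
  assert (HD : 1 <= D) by (unfold D; apply (le_INR 1); auto).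
  assert (I2 : INR 2 = 2) by (simpl; lra). assert (I3 : INR 3 = 3) by (simpl; lra). assert (I4 : INR 4 = 4) by (simpl; lra).
  pose proof (div_bounds (RR d a l) (2 * l) ltac:(lia)) as [A1 A2].
  rewrite (mult_INR 2 l), I2 in A1, A2.
  pose proof (div_bounds (3 * RR d a l) (4 * l) ltac:(lia)) as [B1 B2].
  rewrite (mult_INR 4 l), (mult_INR 3), I4, I3 in B1, B2.
  pose proof (div_bounds (RR d a l) (2 * d * l) ltac:(nia)) as [C1 C2].
  rewrite (mult_INR (2 * d) l), (mult_INR 2 d), I2 in C1, C2.
  fold Rl D Rr in A1, A2, B1, B2, C1, C2.
  assert (EA : INR (AA d a l) = INR (RR d a l / (2 * l)) + 2).
  { unfold AA. rewrite plus_INR. simpl. lra. }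
  set (A' := INR (RR d a l / (2 * l))) in *.
  assert (EK0 : INR (K0 d a l) = INR (3 * RR d a l / (4 * l))) by reflexivity.
  set (k0 := INR (3 * RR d a l / (4 * l))) in *.
  assert (EK1 : INR (K1 d a l) = INR (RR d a l / (2 * d * l))) by reflexivity.
  set (k1 := INR (RR d a l / (2 * d * l))) in *.
  assert (HA0 : 0 <= A') by apply pos_INR.
  assert (Hk10 : 0 <= k1) by apply pos_INR.
  assert (HAK : (AA d a l <= K0 d a l)%nat).
  { destruct (Nat.le_gt_cases (AA d a l) (K0 d a l)) as [|Hc]; auto.
    apply lt_INR in Hc. rewrite EA, EK0 in Hc. nra. }
  assert (EM0 : INR (M0 d a l) = k0 - (A' + 2)).
  { unfold M0. rewrite minus_INR by auto. rewrite EA, EK0; auto. }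
  set (r := INR a ^ ((l - 1) ^ d)).
  assert (Hr0 : 0 <= r) by (apply pow_le, pos_INR).
  assert (Hr : 2 * r <= Rr).
  { unfold Rr, RR. rewrite pow_INR.
    assert (Hpow : ((l - 1) ^ d + 1 <= l ^ d)%nat).
    { destruct l as [|l']; [lia|]. replace (S l' - 1)%nat with l' by lia.
      pose proof (Nat.pow_lt_mono_l l' (S l') d ltac:(lia) ltac:(lia)). lia. }
    assert (HaR : 2 <= INR a) by (rewrite <- I2; apply le_INR; auto).
    apply Rle_trans with (INR a ^ ((l - 1) ^ d + 1)).
    - rewrite pow_add, pow_1. unfold r. assert (0 <= INR a ^ (l-1)^d) by (apply pow_le, pos_INR). nra.
    - apply Rle_pow; auto; lra. }
  destruct (Hx 0%nat ltac:(lia)) as [X0a X0b]. rewrite IZR_mul_nat in X0a, X0b. fold Rl in X0a, X0b.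
  unfold nfun in X0a, X0b.
  set (n0 := nth 0 nl 0%Z) in *.
  assert (Hn0a : A' + 2 <= IZR n0).
  { rewrite <- EA, INR_IZR_INZ. apply IZR_le. lia. }
  assert (Hn0b : IZR n0 <= k0 - 1).
  { assert (E : k0 - 1 = IZR (Z.of_nat (AA d a l) + Z.of_nat (M0 d a l) - 1)).
    { rewrite minus_IZR, plus_IZR, <- !INR_IZR_INZ, EM0, EA. lra. }
    rewrite E. apply IZR_le. lia. }
  assert (Hx0a : Rr / 2 + / 2 <= x 0%nat).
  { assert (Rl * (A' + 2) <= Rl * IZR n0) by (apply Rmult_le_compat_l; lra). nra. }
  assert (Hx0b : x 0%nat <= 3 * Rr / 4).
  { assert (Rl * IZR n0 <= Rl * (k0 - 1)) by (apply Rmult_le_compat_l; lra). nra. }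
  set (c := Rr / (2 * D)).
  assert (Hc : c * (2 * D) = Rr) by (unfold c; field; lra).
  assert (Hc8 : 1 <= c) by nra.
  assert (Hxi : forall i, (1 <= i < d)%nat -> x i ^ 2 <= c ^ 2).
  { intros i Hi. destruct (Hx i ltac:(lia)) as [Xa Xb]. rewrite IZR_mul_nat in Xa, Xb. fold Rl in Xa, Xb.
    unfold nfun in Xa, Xb. specialize (Hni i Hi).
    assert (H1 : 0 <= IZR (nth i nl 0%Z)) by (apply IZR_le; lia).
    assert (H2 : IZR (nth i nl 0%Z) <= k1 - 1).
    { rewrite <- EK1, INR_IZR_INZ. replace 1 with (IZR 1) by auto. rewrite <- minus_IZR. apply IZR_le. lia. }
    assert (Rl * IZR (nth i nl 0%Z) <= Rl * (k1 - 1)) by (apply Rmult_le_compat_l; lra).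
    assert (0 <= Rl * IZR (nth i nl 0%Z)) by (apply Rmult_le_pos; lra).
    assert (Rl * k1 <= c) by nra.
    nra. }
  assert (Hsum_lo : x 0%nat ^ 2 <= sumR d (fun i => x i ^ 2)).
  { apply (sumR_ge0 d (fun i => x i ^ 2)); auto. intros; apply pow2_ge_0. }
  assert (Hsum_hi : sumR d (fun i => x i ^ 2) <= x 0%nat ^ 2 + INR (d - 1) * c ^ 2).
  { apply (sumR_le d (fun i => x i ^ 2)); auto. }
  rewrite minus_INR in Hsum_hi by lia. fold D in Hsum_hi. simpl INR in Hsum_hi.
  assert (Hrr : 0 < Rr) by nra.
  unfold in_layer, enorm. replace (INR a ^ l ^ d) with Rr by (unfold Rr, RR; rewrite pow_INR; auto). change (INR a ^ (l - 1) ^ d) with r. split.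
  - rewrite <- (sqrt_pow2 r Hr0). apply sqrt_lt_1_alt. split; [apply pow2_ge_0|].
    assert (r < x 0%nat) by lra. nra.
  - rewrite <- (sqrt_pow2 Rr) by lra. apply sqrt_lt_1_alt. split.
    + apply Rle_trans with (x 0%nat ^ 2); auto. apply pow2_ge_0.
    + assert ((D - 1) * c ^ 2 <= Rr ^ 2 / 4) by nra.
      assert (x 0%nat ^ 2 <= (3 * Rr / 4) ^ 2) by nra.
      nra.
Qed.

Lemma count (d a l : nat) (q : R) : (1 <= d)%nat -> (2 <= a)%nat -> (1 <= l)%nat -> 0 < q ->
  16 * INR d * INR l <= INR (RR d a l) -> 1 <= INR a ^ d * q ->
  2 * (16 * INR d) ^ d * INR l ^ (d + 2) <= (INR a ^ d * q) ^ l ->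
  INR l * INR (S l) <= INR (M0 d a l * K1 d a l ^ (d - 1)) * q ^ (l ^ d).
Proof.
  intros Hd Ha Hl Hq Hbig Hb1 Hexp.
  set (Rl := INR l) in *. set (D := INR d) in *. set (Rr := INR (RR d a l)) in *.
  assert (HRl : 1 <= Rl) by (unfold Rl; apply (le_INR 1); auto).
  assert (HD : 1 <= D) by (unfold D; apply (le_INR 1); auto).
  assert (I2 : INR 2 = 2) by (simpl; lra). assert (I3 : INR 3 = 3) by (simpl; lra). assert (I4 : INR 4 = 4) by (simpl; lra).
  pose proof (div_bounds (RR d a l) (2 * l) ltac:(lia)) as [A1 A2].
  rewrite (mult_INR 2 l), I2 in A1, A2.
  pose proof (div_bounds (3 * RR d a l) (4 * l) ltac:(lia)) as [B1 B2].
  rewrite (mult_INR 4 l), (mult_INR 3), I4, I3 in B1, B2.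
  pose proof (div_bounds (RR d a l) (2 * d * l) ltac:(nia)) as [C1 C2].
  rewrite (mult_INR (2 * d) l), (mult_INR 2 d), I2 in C1, C2.
  fold Rl D Rr in A1, A2, B1, B2, C1, C2.
  assert (EA : INR (AA d a l) = INR (RR d a l / (2 * l)) + 2).
  { unfold AA. rewrite plus_INR. simpl. lra. }
  set (A' := INR (RR d a l / (2 * l))) in *.
  assert (EK0 : INR (K0 d a l) = INR (3 * RR d a l / (4 * l))) by reflexivity.
  set (k0 := INR (3 * RR d a l / (4 * l))) in *.
  assert (EK1 : INR (K1 d a l) = INR (RR d a l / (2 * d * l))) by reflexivity.
  set (k1 := INR (RR d a l / (2 * d * l))) in *.
  assert (HA0 : 0 <= A') by apply pos_INR.
  assert (Hk10 : 0 <= k1) by apply pos_INR.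
  assert (HAK : (AA d a l <= K0 d a l)%nat).
  { destruct (Nat.le_gt_cases (AA d a l) (K0 d a l)) as [|Hc]; auto.
    apply lt_INR in Hc. rewrite EA, EK0 in Hc. nra. }
  assert (EM0 : INR (M0 d a l) = k0 - (A' + 2)).
  { unfold M0. rewrite minus_INR by auto. rewrite EA, EK0; auto. }
  set (w := 16 * D * Rl).
  assert (Hw : 1 <= w) by (unfold w; nra).
  assert (HM : Rr <= w * INR (M0 d a l)) by (rewrite EM0; unfold w; nra).
  assert (HK : Rr <= w * INR (K1 d a l)) by (rewrite EK1; unfold w; nra).
  assert (Hrr : 0 <= Rr) by (unfold Rr; apply pos_INR).
  rewrite mult_INR, pow_INR.
  set (m0 := INR (M0 d a l)) in *. set (kk := INR (K1 d a l)) in *.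
  assert (HN : Rr ^ d <= w ^ d * (m0 * kk ^ (d - 1))).
  { replace d with (S (d - 1)) at 1 2 by lia. simpl.
    replace (w * w ^ (d - 1) * (m0 * kk ^ (d - 1))) with ((w * m0) * (w * kk) ^ (d - 1))
      by (rewrite Rpow_mult_distr; ring).
    apply Rmult_le_compat; auto; [apply pow_le; auto|]. apply pow_incr; auto. }
  assert (Hb : Rr ^ d * q ^ (l ^ d) = (INR a ^ d * q) ^ (l ^ d)).
  { unfold Rr, RR. rewrite pow_INR, <- pow_mult, Rpow_mult_distr, <- pow_mult.
    rewrite Nat.mul_comm; auto. }
    assert (Hll : (l <= l ^ d)%nat).
  { rewrite <- (Nat.pow_1_r l) at 1. apply Nat.pow_le_mono_r; lia. }
  assert (Hbl : (INR a ^ d * q) ^ l <= (INR a ^ d * q) ^ (l ^ d)) by (apply Rle_pow; auto).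
  assert (Hwd : w ^ d = (16 * D) ^ d * Rl ^ d) by (unfold w; apply Rpow_mult_distr).
  assert (Hpow2 : Rl ^ (d + 2) = Rl ^ d * (Rl * Rl)) by (rewrite pow_add; simpl; ring).
  assert (Hwpos : 0 < w ^ d) by (apply pow_lt; lra).
  assert (Hqm : 0 < q ^ (l ^ d)) by (apply pow_lt; auto).
  assert (Hkey : w ^ d * (2 * (Rl * Rl)) <= w ^ d * (m0 * kk ^ (d - 1) * q ^ (l ^ d))).
  { apply Rle_trans with (Rr ^ d * q ^ (l ^ d)).
    - rewrite Hb. rewrite Hwd. rewrite Hpow2 in Hexp. nra.
    - replace (w ^ d * (m0 * kk ^ (d - 1) * q ^ (l ^ d))) with ((w ^ d * (m0 * kk ^ (d - 1))) * q ^ (l ^ d)) by ring.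
      apply Rmult_le_compat_r; lra. }
  apply Rmult_le_reg_l in Hkey; auto. rewrite S_INR. fold Rl. nra.
Qed.

Theorem mainTheorem11 (d : nat) (hd : (1 <= d)%nat) (p : R)
  (hp0 : 0 < p) (hp1 : p < 1) (a : nat) (ha : (1 <= a)%nat)
  (haq : INR a ^ d * (1 - p) > 1) :
  almost_surely d p (fun omega =>
    exists l0 : nat, forall l : nat, (1 <= l)%nat -> (l0 <= l)%nat ->
      exists n : nat -> Z,
        (forall x, in_Qln d l n x -> in_layer d a l x) /\
        V_zero_on_Qln d l n omega).
Proof.
  assert (Ha2 : (2 <= a)%nat).
  { destruct (Nat.eq_dec a 1) as [->|]; [|lia]. simpl in haq. rewrite pow1 in haq. lra. }
  set (q := 1 - p) in *.
  assert (Hq : 0 < q) by (unfold q; lra).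
  set (D := INR d).
  destruct (poly_exp 1 2 (16 * D) ltac:(lra)) as [N1 HN1].
  destruct (poly_exp (d + 2) (INR a ^ d * q) (2 * (16 * D) ^ d) haq) as [N2 HN2].
  set (L0 := Nat.max 1 (Nat.max N1 N2)).
  assert (Hbig : forall l, (L0 <= l)%nat -> 16 * INR d * INR l <= INR (RR d a l)).
  { intros l Hl. specialize (HN1 l ltac:(lia)). rewrite pow_1 in HN1.
    unfold RR. rewrite pow_INR.
    assert (I2 : INR 2 = 2) by (simpl; lra).
    assert (HaR : 2 <= INR a) by (rewrite <- I2; apply le_INR; auto).
    assert (Hll : (l <= l ^ d)%nat).
    { rewrite <- (Nat.pow_1_r l) at 1. apply Nat.pow_le_mono_r; lia. }
    apply Rle_trans with (2 ^ l); [exact HN1|].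
    apply Rle_trans with (2 ^ (l ^ d)); [apply Rle_pow; auto; lra|].
    apply pow_incr; lra. }
  unfold almost_surely.
  apply (null_from_layers d p (cyls d a) _ L0); [lra|lia| | | |].
  - intros l c Hl Hc. apply (cyls_valid d a l c hd); auto; lia.
  - intros l Hl. apply cyls_nonempty; auto; lia.
  - intros l Hl. rewrite cyls_sum by auto. fold q.
    assert (Hc := count d a l q hd Ha2 ltac:(lia) Hq (Hbig l Hl) ltac:(lra) (HN2 l ltac:(lia))).
    set (N := (M0 d a l * K1 d a l ^ (d - 1))%nat) in *.
    set (x := q ^ (l ^ d)).
    assert (Hx : 0 <= x <= 1).
    { unfold x. split; [apply pow_le; lra|]. apply pow_le_1'. unfold q; lra. }
    pose proof (bern_neg x N Hx) as HB.
    assert (Hy : 0 <= (1 - x) ^ N) by (apply pow_le; lra).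
    assert (Hz : 0 < INR l * INR (S l)) by (apply Rmult_lt_0_compat; apply lt_0_INR; lia).
    apply (Rmult_le_reg_r (INR l * INR (S l))); auto. rewrite Rinv_l by lra.
    fold x in Hc. nra.
  - intros omega Ho L.
    set (L' := Nat.max L L0).
    destruct (classic (exists l, (L' <= l)%nat /\ ~ exists n : nat -> Z,
        (forall x, in_Qln d l n x -> in_layer d a l x) /\ V_zero_on_Qln d l n omega)) as [[l [Hl Hno]]|Hall].
    + exists l. split; [lia|]. apply cover_all.
      intros B HB. unfold blocks in HB. apply in_map_iff in HB. destruct HB as [nl [<- Hnl]].
      destruct (idx_mem d a l nl hd Hnl) as [Hlen _].
      assert (HV : ~ V_zero_on_Qln d l (nfun nl) omega).
      { intros HV. apply Hno. exists (nfun nl). split; auto.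
        apply (geo d a l hd Ha2 ltac:(lia) (Hbig l ltac:(lia)) nl Hnl). }
      apply not_all_ex_not in HV. destruct HV as [k Hk]. apply imply_to_and in Hk. destruct Hk as [Hk1 Hk2].
      exists k. split; [apply (site_in_cube d); auto|]. destruct (omega k); auto; congruence.
    + exfalso. apply Ho. exists L'. intros l Hl1 Hl. apply NNPP. intros Hn. apply Hall. exists l; auto.
Qed.
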